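(* Let $\Xi$ be a $(k+l)$-graph such that for every vertex $v$ and every $j\in\{1,\dots,l\}$ we have $|v\Xi^{(0,e_j)}|=|\Xi^{(0,e_j)}v|=1$. Then for each vertex $v$ and $m\in\mathbb{N}^l$ there is a unique path $\eta_{v,m}\in\Xi^{(0,m)}v$, and there is a unique action $\alpha$ of $\mathbb{Z}^l$ on the $k$-graph $\Xi^{(\mathbb{N}^k,0)}$ by automorphisms satisfying $\alpha_m(\xi)=(\eta_{r(\xi),m}\xi)(0,d(\xi))$ for all $\xi\in\Xi^{(\mathbb{N}^k,0)}$ and $m\in\mathbb{N}^l$. Moreover, $\Xi$ is isomorphic to $\Xi^{(\mathbb{N}^k,0)}\times_\alpha\mathbb{Z}^l$.
   Context: A $k$-graph is a countable category with a functor $d$ to $\mathbb{N}^k$ with the unique factorisation property; vertices are degree-$0$ morphisms, $\Xi^n=d^{-1}(n)$, $v\Xi^n=\Xi^n\cap r^{-1}(v)$, $\Xi^nv=\Xi^n\cap s^{-1}(v)$. We identify $\mathbb{N}^{k+l}=\mathbb{N}^k\times\mathbb{N}^l$; $e_j$ is the $j$th generator of $\mathbb{N}^l$. For $\lambda$ of degree $p$ and $0\le n\le p$, $\lambda(0,n)$ is the unique path of degree $n$ with $\lambda=\lambda(0,n)\lambda'$ for some $\lambda'$. $\Xi^{(\mathbb{N}^k,0)}$ is the $k$-graph with morphisms $\bigcup_{p\in\mathbb{N}^k}\Xi^{(p,0)}$ and degree given by the first $k$ coordinates of $d$. An automorphism is a bijective degree-preserving functor. Given an action $\alpha$ of $\mathbb{Z}^l$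 on a $k$-graph $\Lambda$, $\Lambda\times_\alpha\mathbb{Z}^l$ is the $(k+l)$-graph with morphisms $\Lambda\times\mathbb{N}^l$, degree $(d(\lambda),m)$, $r(\lambda,m)=(r(\lambda),0)$, $s(\lambda,m)=(\alpha_{-m}(s(\lambda)),0)$, $(\mu,m)(\nu,n)=(\mu\alpha_m(\nu),m+n)$. An isomorphism of $(k+l)$-graphs is a bijective degree-preserving functor. *)

(* Defs.v *)
From mathcomp Require Import all_boot all_algebra.
Set Implicit Arguments. Unset Strict Implicit. Unset Printing Implicit Defensive.
Import GRing.Theory.
Local Open Scope ring_scope.

Definition NN (k : nat) := {ffun 'I_k -> nat}.
Definition ZZ (l : nat) := {ffun 'I_l -> int}.

Definition join k l (p : NN k) (m : NN l) : NN (k + l) :=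
  [ffun i => match split i with inl a => p a | inr b => m b end].
Definition degk k l (x : NN (k + l)) : NN k := [ffun a => x (lshift l a)].
Definition degl k l (x : NN (k + l)) : NN l := [ffun b => x (rshift k b)].
Definition gen l (j : 'I_l) : NN l := [ffun i => nat_of_bool (i == j)].
Definition toZ l (m : NN l) : ZZ l := [ffun i => (m i)%:Z].

(** Graph data: a category presented through its morphisms only (objects =
    identity morphisms = vertices), range r, source s, composition as a
    relation  gcomp mu nu lam  meaning  lam = mu nu  (defined iff s mu = r nu),
    and a degree map. *)
Record gdata (D : Type) := GData {
  gMor : Type;
  gr : gMor -> gMor;
  gs : gMor -> gMor;
  gcomp : gMor -> gMor -> gMor -> Prop;
  gd : gMor -> D }.

Definition countable (T : Type) := exists f : T -> nat, injective f.

Definition is_category D (G : gdata D) : Prop :=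
  (forall x : gMor G, gr (gr x) = gr x /\ gs (gr x) = gr x) /\
  (forall x : gMor G, gs (gs x) = gs x /\ gr (gs x) = gs x) /\
  (forall mu nu : gMor G, gs mu = gr nu <-> exists lam, gcomp mu nu lam) /\
  (forall mu nu lam lam' : gMor G, gcomp mu nu lam -> gcomp mu nu lam' -> lam = lam') /\
  (forall mu nu lam : gMor G, gcomp mu nu lam -> gr lam = gr mu /\ gs lam = gs nu) /\
  (forall x : gMor G, gcomp (gr x) x x /\ gcomp x (gs x) x) /\
  (forall mu nu rho a b c : gMor G, gcomp mu nu a -> gcomp a rho b -> gcomp nu rho c ->
     gcomp mu c b).

Definition is_kgraph k (G : gdata (NN k)) : Prop :=
  [/\ countable (gMor G), is_category G,
      (forall mu nu lam : gMor G, gcomp mu nu lam -> gd lam = gd mu + gd nu) &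
      (forall (lam : gMor G) (m n : NN k), gd lam = m + n ->
         exists! mn : gMor G * gMor G,
           [/\ gd mn.1 = m, gd mn.2 = n & gcomp mn.1 mn.2 lam])].

Definition vertex D (z : D) (G : gdata D) (v : gMor G) := gd v = z.

(** lam(0,n): the unique path mu of degree n with lam = mu lam' *)
Definition seg0 D (G : gdata D) (lam : gMor G) (n : D) (mu : gMor G) :=
  gd mu = n /\ exists lam', gcomp mu lam' lam.

Definition functor D (G H : gdata D) (F : gMor G -> gMor H) :=
  [/\ (forall x : gMor G, F (gr x) = gr (F x)),
      (forall x : gMor G, F (gs x) = gs (F x)) &
      (forall mu nu lam : gMor G, gcomp mu nu lam -> gcomp (F mu) (F nu) (F lam))].

Definition graph_iso D (G H : gdata D) (F : gMor G -> gMor H) :=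
  [/\ bijective F, functor F & forall x : gMor G, gd (F x) = gd x].

Definition graph_isomorphic D (G H : gdata D) :=
  exists F : gMor G -> gMor H, graph_iso F.

Section Sub.
Variables (k l : nat) (Xi : gdata (NN (k + l))).

Definition subMor := {x : gMor Xi | degl (gd x) == 0}.

(* for a (k+l)-graph, r and s of a morphism have degree 0, so the default
   value in insubd is never used *)
Definition subgraph : gdata (NN k) :=
  @GData (NN k) subMor
    (fun x => insubd x (gr (val x)))
    (fun x => insubd x (gs (val x)))
    (fun mu nu lam => gcomp (val mu) (val nu) (val lam))
    (fun x => degk (gd (val x))).
End Sub.

Definition is_action D l (G : gdata D) (alpha : ZZ l -> gMor G -> gMor G) :=
  [/\ (forall x : gMor G, alpha 0 x = x),
      (forall a b (x : gMor G), alpha (a + b) x = alpha a (alpha b x)) &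
      (forall a, graph_iso (alpha a))].

Definition crossed k l (L : gdata (NN k)) (alpha : ZZ l -> gMor L -> gMor L)
  : gdata (NN (k + l)) :=
  @GData (NN (k + l)) (gMor L * NN l)%type
    (fun x => (gr x.1, 0))
    (fun x => (alpha (- toZ x.2) (gs x.1), 0))
    (fun x y z => [/\ (alpha (- toZ x.2) (gs x.1), 0 : NN l) = (gr y.1, 0),
                      gcomp x.1 (alpha (toZ x.2) y.1) z.1 & z.2 = x.2 + y.2])
    (fun x => join (gd x.1) x.2).

(* Main.v *)
From Stdlib Require Import ClassicalEpsilon.
Require Import Defs.
From mathcomp Require Import all_boot all_algebra.
Import GRing.Theory.
Set Implicit Arguments. Unset Strict Implicit. Unset Printing Implicit Defensive.
Local Open Scope ring_scope.

Lemma addE k (f g : NN k) i : (f + g) i = (f i + g i)%N.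
Proof. by rewrite ffunE. Qed.
Lemma zeroE k i : (0 : NN k) i = 0%N.
Proof. by rewrite ffunE. Qed.

Lemma addNI k (a b c : NN k) : a + b = a + c -> b = c.
Proof. move=> /ffunP H; apply/ffunP=> i; have := H i; rewrite !addE; apply: addnI. Qed.
Lemma addIN k (a b c : NN k) : b + a = c + a -> b = c.
Proof. by rewrite ![_ + a]addrC; apply: addNI. Qed.

Lemma splitL k l (a : 'I_k) : split (lshift l a) = inl a.
Proof. exact: (unsplitK (inl a)). Qed.
Lemma splitR k l (b : 'I_l) : split (rshift k b) = inr b.
Proof. exact: (unsplitK (inr b)). Qed.

Lemma degkJ k l (p : NN k) (m : NN l) : degk (join p m) = p.
Proof. by apply/ffunP=> a; rewrite !ffunE splitL. Qed.
Lemma deglJ k l (p : NN k) (m : NN l) : degl (join p m) = m.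
Proof. by apply/ffunP=> a; rewrite !ffunE splitR. Qed.
Lemma joinK k l (x : NN (k + l)) : join (degk x) (degl x) = x.
Proof.
apply/ffunP=> i; rewrite ffunE -{2}(splitK i).
by case: (split i) => a; rewrite ffunE.
Qed.
Lemma joinD k l (p p' : NN k) (m m' : NN l) :
  join (p + p') (m + m') = join p m + join p' m'.
Proof. by apply/ffunP=> i; rewrite !ffunE; case: (split i) => a; rewrite ffunE. Qed.
Lemma join00 k l : join (0 : NN k) (0 : NN l) = 0.
Proof. by apply/ffunP=> i; rewrite !ffunE; case: (split i) => a; rewrite ffunE. Qed.
Lemma join_inj k l (p p' : NN k) (m m' : NN l) :
  join p m = join p' m' -> p = p' /\ m = m'.
Proof. by move=> H; split; [rewrite -(degkJ p m) H degkJ|rewrite -(deglJ p m) H deglJ]. Qed.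
Lemma degkD k l (x y : NN (k + l)) : degk (x + y) = degk x + degk y.
Proof. by apply/ffunP=> a; rewrite !ffunE. Qed.
Lemma deglD k l (x y : NN (k + l)) : degl (x + y) = degl x + degl y.
Proof. by apply/ffunP=> a; rewrite !ffunE. Qed.
Lemma degk0 k l : degk (0 : NN (k + l)) = 0.
Proof. by apply/ffunP=> a; rewrite !ffunE. Qed.
Lemma degl0 k l : degl (0 : NN (k + l)) = 0.
Proof. by apply/ffunP=> a; rewrite !ffunE. Qed.

Lemma NN_ind l (P : NN l -> Prop) : P 0 -> (forall m j, P m -> P (m + gen j)) -> forall m, P m.
Proof.
move=> H0 HS m; move: {2}(\sum_i m i)%N (erefl (\sum_i m i)%N) => n.
elim: n m => [|n IH] m Hm.
  suff -> : m = 0 by [].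
  apply/ffunP=> i; rewrite zeroE; apply/eqP; rewrite -leqn0.
  by rewrite -Hm (bigD1 i) //= leq_addr.
have [j Hj] : exists j, (0 < m j)%N.
  apply/existsP; apply: contraT; rewrite negb_exists => /forallP H.
  move: Hm; rewrite big1 // => i _; apply/eqP; rewrite -leqn0 leqNgt; exact: H.
set m' : NN l := [ffun i => (m i - (i == j))%N].
have -> : m = m' + gen j.
  apply/ffunP=> i; rewrite addE !ffunE; case: eqP => [->|_]; last by rewrite subn0 addn0.
  by rewrite subnK.
apply: HS; apply: IH.
have : (\sum_i m i = \sum_i m' i + 1)%N.
  rewrite (bigD1 j) //= [X in _ = (X + _)%N](bigD1 j) //= !ffunE eqxx.
  rewrite addnAC subnK //; congr (_ + _)%N.
  by apply: eq_bigr => i /negbTE Hi; rewrite ffunE Hi subn0.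
by rewrite Hm addn1 => -[].
Qed.

Definition posz l (a : ZZ l) : NN l := [ffun i => if a i is Posz n then n else 0%N].
Definition negz l (a : ZZ l) : NN l := [ffun i => if a i is Negz n then n.+1 else 0%N].

Lemma toZD l (m n : NN l) : toZ (m + n) = toZ m + toZ n.
Proof. by apply/ffunP=> i; rewrite !ffunE PoszD. Qed.
Lemma toZ0 l : toZ (0 : NN l) = 0.
Proof. by apply/ffunP=> i; rewrite !ffunE. Qed.
Lemma toZ_inj l : injective (@toZ l).
Proof. by move=> m n /ffunP H; apply/ffunP=> i; have := H i; rewrite !ffunE => -[]. Qed.

Lemma posnegE l (a : ZZ l) : a = toZ (posz a) - toZ (negz a).
Proof.
apply/ffunP=> i; rewrite !ffunE; case: (a i) => n //=; first by rewrite subr0.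
by rewrite NegzE sub0r.
Qed.

Lemma posnegC l (p n p' n' : NN l) : toZ p - toZ n = toZ p' - toZ n' -> p + n' = p' + n.
Proof.
move=> H; apply: toZ_inj; rewrite !toZD; apply/eqP; rewrite -subr_eq addrAC.
by rewrite H addrNK.
Qed.

Lemma posz_toZ l (m : NN l) : posz (toZ m) = m.
Proof. by apply/ffunP=> i; rewrite !ffunE. Qed.
Lemma negz_toZ l (m : NN l) : negz (toZ m) = 0.
Proof. by apply/ffunP=> i; rewrite !ffunE. Qed.
Lemma posz_NtoZ l (m : NN l) : posz (- toZ m) = 0.
Proof. by apply/ffunP=> i; rewrite !ffunE; case: (m i). Qed.
Lemma negz_NtoZ l (m : NN l) : negz (- toZ m) = m.
Proof. by apply/ffunP=> i; rewrite !ffunE; case: (m i). Qed.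
Section G.
Variables (k l : nat) (Xi : gdata (NN (k + l))).
Hypothesis HK : is_kgraph Xi.
Local Notation M := (gMor Xi).

Lemma grr (x : M) : gr (gr x) = gr x. Proof. by case: HK => _ [H _] _ _; case: (H x). Qed.
Lemma gsr (x : M) : gs (gr x) = gr x. Proof. by case: HK => _ [H _] _ _; case: (H x). Qed.
Lemma gss (x : M) : gs (gs x) = gs x. Proof. by case: HK => _ [_ [H _]] _ _; case: (H x). Qed.
Lemma grs (x : M) : gr (gs x) = gs x. Proof. by case: HK => _ [_ [H _]] _ _; case: (H x). Qed.
Lemma compP (mu nu : M) : gs mu = gr nu <-> exists lam, gcomp mu nu lam.
Proof. by case: HK => _ [_ [_ [H _]]] _ _. Qed.
Lemma comp_fun (mu nu lam lam' : M) : gcomp mu nu lam -> gcomp mu nu lam' -> lam = lam'.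
Proof. by case: HK => _ [_ [_ [_ [H _]]]] _ _; apply: H. Qed.
Lemma comp_rs (mu nu lam : M) : gcomp mu nu lam -> gr lam = gr mu /\ gs lam = gs nu.
Proof. by case: HK => _ [_ [_ [_ [_ [H _]]]]] _ _; apply: H. Qed.
Lemma comp_id (x : M) : gcomp (gr x) x x /\ gcomp x (gs x) x.
Proof. by case: HK => _ [_ [_ [_ [_ [_ [H _]]]]]] _ _. Qed.
Lemma comp_as (mu nu rho a b c : M) : gcomp mu nu a -> gcomp a rho b -> gcomp nu rho c ->
     gcomp mu c b.
Proof. by case: HK => _ [_ [_ [_ [_ [_ [_ H]]]]]] _ _; apply: H. Qed.
Lemma comp_d (mu nu lam : M) : gcomp mu nu lam -> gd lam = gd mu + gd nu.
Proof. by case: HK => _ _ H _; apply: H. Qed.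
Lemma ufpE (lam : M) (m n : NN (k + l)) : gd lam = m + n ->
         exists! mn : M * M, [/\ gd mn.1 = m, gd mn.2 = n & gcomp mn.1 mn.2 lam].
Proof. by case: HK => _ _ _ H; apply: H. Qed.

Definition cmp (x y : M) : M := epsilon (inhabits x) (fun z => gcomp x y z).

Lemma cmpP (x y : M) : gs x = gr y -> gcomp x y (cmp x y).
Proof. by move=> /compP H; apply: epsilon_spec. Qed.
Lemma cmpE (x y z : M) : gcomp x y z -> cmp x y = z.
Proof. move=> H; apply: comp_fun (H); apply: cmpP; apply/compP; by exists z. Qed.
Lemma comp_src (x y z : M) : gcomp x y z -> gs x = gr y.
Proof. by move=> H; apply/compP; exists z. Qed.

Lemma cmp_r (x y : M) : gs x = gr y -> gr (cmp x y) = gr x.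
Proof. by move=> /cmpP /comp_rs []. Qed.
Lemma cmp_s (x y : M) : gs x = gr y -> gs (cmp x y) = gs y.
Proof. by move=> /cmpP /comp_rs []. Qed.
Lemma cmp_d (x y : M) : gs x = gr y -> gd (cmp x y) = gd x + gd y.
Proof. by move=> /cmpP /comp_d. Qed.
Lemma cmp1l (x : M) : cmp (gr x) x = x.
Proof. by apply: cmpE; case: (comp_id x). Qed.
Lemma cmp1r (x : M) : cmp x (gs x) = x.
Proof. by apply: cmpE; case: (comp_id x). Qed.
Lemma cmpA (x y z : M) : gs x = gr y -> gs y = gr z ->
  cmp x (cmp y z) = cmp (cmp x y) z.
Proof.
move=> Hxy Hyz; apply: cmpE; apply: (comp_as (cmpP Hxy)) (cmpP Hyz).
by apply: cmpP; rewrite cmp_s.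
Qed.

Lemma gd_r (x : M) : gd (gr x) = 0.
Proof.
have := comp_d (proj1 (comp_id x)) => H.
by apply: (@addIN _ (gd x)); rewrite add0r -H.
Qed.
Lemma gd_s (x : M) : gd (gs x) = 0.
Proof.
have := comp_d (proj2 (comp_id x)) => H.
by apply: (@addNI _ (gd x)); rewrite addr0 -H.
Qed.
Lemma deg0 (x : M) : gd x = 0 -> gr x = x /\ gs x = x.
Proof.
move=> H0; have Hx : gd x = 0 + 0 by rewrite H0 addr0.
have [[a b] [[/= Ha Hb Hab] U]] := ufpE Hx.
have E1 := U (gr x, x); have E2 := U (x, gs x).
have := E1 (And3 (gd_r x) H0 (proj1 (comp_id x))).
have := E2 (And3 H0 (gd_s x) (proj2 (comp_id x))).
move=> E2' E1'; rewrite E2' in E1'; case: E1' => H1 H2; split; congruence.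
Qed.

Lemma ufp (a b a' b' : M) : gs a = gr b -> gs a' = gr b' -> cmp a b = cmp a' b' ->
  gd a = gd a' -> a = a' /\ b = b'.
Proof.
move=> H H' E Ed.
have Ed' : gd b = gd b'.
  by apply: (@addNI _ (gd a)); rewrite -cmp_d // E cmp_d // Ed.
have [[c d] [_ U]] := ufpE (cmp_d H).
have := U (a, b) (And3 erefl erefl (cmpP H)).
have := U (a', b') (And3 (esym Ed) (esym Ed') _).
rewrite E => /(_ (cmpP H')) -> [-> ->]; by [].
Qed.

Lemma fact (x : M) (m n : NN (k + l)) : gd x = m + n ->
  exists a b, [/\ gs a = gr b, cmp a b = x, gd a = m & gd b = n].
Proof.
move=> /ufpE [[a b] [[/= Ha Hb Hab] _]]; exists a, b; split => //.
  exact: comp_src Hab.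
exact: cmpE.
Qed.

Hypothesis HV : forall v : gMor Xi, vertex 0 v -> forall j : 'I_l,
     (exists! lam : gMor Xi, gr lam = v /\ gd lam = join 0 (gen j)) /\
     (exists! lam : gMor Xi, gs lam = v /\ gd lam = join 0 (gen j)).

Lemma j0m (m n : NN l) : join (0 : NN k) m + join 0 n = join 0 (m + n).
Proof. by rewrite -joinD addr0. Qed.

Lemma etaS_ex (m : NN l) : forall v : M, gd v = 0 ->
  exists! e : M, gd e = join 0 m /\ gs e = v.
Proof.
elim/NN_ind: m => [|m j IH] v Hv.
  exists v; rewrite join00; split; first by split => //; case: (deg0 Hv).
  by move=> e [He <-]; case: (deg0 He).
have [e [[He1 He2] Ue]] := IH v Hv.
have [_ [a [[Ha1 Ha2] Ua]]] := HV (gd_r e) j.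
have Hae : gs a = gr e by [].
exists (cmp a e); split.
  by rewrite cmp_d // cmp_s // He1 Ha2 j0m addrC.
move=> e' [He'1 He'2].
have Hd : gd e' = join 0 (gen j) + join 0 m by rewrite j0m addrC.
have [a' [b' [Hab' Ee Ha' Hb']]] := fact Hd.
have Eb : e = b' by apply: Ue; rewrite -He'2 -Ee cmp_s.
have Ea : a = a' by apply: Ua; rewrite -Eb in Hab'.
by rewrite -Ee Ea Eb.
Qed.

Lemma etaR_ex (m : NN l) : forall v : M, gd v = 0 ->
  exists! e : M, gd e = join 0 m /\ gr e = v.
Proof.
elim/NN_ind: m => [|m j IH] v Hv.
  exists v; rewrite join00; split; first by split => //; case: (deg0 Hv).
  by move=> e [He <-]; case: (deg0 He).
have [e [[He1 He2] Ue]] := IH v Hv.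
have [[a [[Ha1 Ha2] Ua]] _] := HV (gd_s e) j.
have Hae : gs e = gr a by [].
exists (cmp e a); split.
  by rewrite cmp_d // cmp_r // He1 Ha2 j0m.
move=> e' [He'1 He'2].
have Hd : gd e' = join 0 m + join 0 (gen j) by rewrite j0m.
have [b' [a' [Hab' Ee Hb' Ha']]] := fact Hd.
have Eb : e = b' by apply: Ue; rewrite -He'2 -Ee cmp_r.
have Ea : a = a' by apply: Ua; rewrite -Eb in Hab'.
by rewrite -Ee Ea Eb.
Qed.

Definition etaV (v : M) (m : NN l) : M :=
  epsilon (inhabits v) (fun e => gd e = join 0 m /\ gs e = v).
Definition etaRV (v : M) (m : NN l) : M :=
  epsilon (inhabits v) (fun e => gd e = join 0 m /\ gr e = v).

Lemma etaV_spec v m : gd v = 0 -> gd (etaV v m) = join 0 m /\ gs (etaV v m) = v.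
Proof. move=> Hv; have [e [H _]] := etaS_ex m Hv; rewrite /etaV.
by apply: (epsilon_spec (inhabits v) (fun e => gd e = join 0 m /\ gs e = v)); exists e. Qed.
Lemma etaV_d v m : gd v = 0 -> gd (etaV v m) = join 0 m.
Proof. by move=> Hv; case: (etaV_spec m Hv). Qed.
Lemma etaV_s v m : gd v = 0 -> gs (etaV v m) = v.
Proof. by move=> Hv; case: (etaV_spec m Hv). Qed.
Lemma etaV_u (v : M) (m : NN l) (e : M) : gd e = join 0 m -> gs e = v -> e = etaV v m.
Proof.
move=> Hd Hs; have Hv : gd v = 0 by rewrite -Hs gd_s.
have [e0 [_ U]] := etaS_ex m Hv.
by rewrite -(U e (conj Hd Hs)) -(U _ (etaV_spec m Hv)).
Qed.
Lemma etaRV_spec v m : gd v = 0 -> gd (etaRV v m) = join 0 m /\ gr (etaRV v m) = v.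
Proof. move=> Hv; have [e [H _]] := etaR_ex m Hv; rewrite /etaRV.
by apply: (epsilon_spec (inhabits v) (fun e => gd e = join 0 m /\ gr e = v)); exists e. Qed.
Lemma etaR_u (v e e' : M) (m : NN l) : gd e = join 0 m -> gr e = v -> gd e' = join 0 m -> gr e' = v -> e = e'.
Proof.
move=> Hd Hs Hd' Hs'; have Hv : gd v = 0 by rewrite -Hs gd_r.
have [e0 [_ U]] := etaR_ex m Hv.
by rewrite -(U e (conj Hd Hs)) -(U e' (conj Hd' Hs')).
Qed.
Lemma etaV_rinj v w m : gd v = 0 -> gd w = 0 -> gr (etaV v m) = gr (etaV w m) -> v = w.
Proof.
move=> Hv Hw E.
have := etaR_u (etaV_d m Hv) erefl (etaV_d m Hw) (esym E).
by move=> E'; rewrite -(etaV_s m Hv) E' etaV_s.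
Qed.
Lemma etaV0 v : gd v = 0 -> etaV v 0 = v.
Proof. by move=> Hv; case: (deg0 Hv) => _ Hs; symmetry; apply: etaV_u; rewrite ?join00. Qed.
Lemma etaVD v m n : gd v = 0 ->
  etaV v (m + n) = cmp (etaV (gr (etaV v n)) m) (etaV v n).
Proof.
move=> Hv; symmetry; apply: etaV_u.
  by rewrite cmp_d ?etaV_s ?gd_r // !etaV_d ?gd_r // j0m.
by rewrite cmp_s ?etaV_s ?gd_r.
Qed.

Definition Sq (m : NN l) (x y : M) :=
  gs y = gr (etaV (gs x) m) /\ cmp (etaV (gr x) m) x = cmp y (etaV (gs x) m).

Lemma eVs (x : M) m : gs (etaV (gr x) m) = gr x.
Proof. by rewrite etaV_s ?gd_r. Qed.
Lemma eVs' (x : M) m : gs (etaV (gs x) m) = gs x.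
Proof. by rewrite etaV_s ?gd_s. Qed.
Lemma eVd (x : M) m : gd (etaV (gr x) m) = join 0 m.
Proof. by rewrite etaV_d ?gd_r. Qed.
Lemma eVd' (x : M) m : gd (etaV (gs x) m) = join 0 m.
Proof. by rewrite etaV_d ?gd_s. Qed.

Lemma Sq_d m x y : Sq m x y -> gd y = gd x.
Proof.
case=> H E; apply: (@addIN _ (join 0 m)).
by rewrite -[in LHS](eVd' x m) -cmp_d // -E cmp_d ?eVs // eVd addrC.
Qed.
Lemma Sq_r m x y : Sq m x y -> gr y = gr (etaV (gr x) m).
Proof. by case=> H E; rewrite -(cmp_r H) -E cmp_r ?eVs. Qed.

Lemma Sq_fun m x y y' : Sq m x y -> Sq m x y' -> y = y'.
Proof.
move=> S1 S2; have := Sq_d S1; rewrite -(Sq_d S2) => Ed.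
case: S1 S2 => H1 E1 [H2 E2].
by case: (ufp H1 H2 (etrans (esym E1) E2) Ed).
Qed.
Lemma Sq_ex m x : exists y, Sq m x y.
Proof.
have Hd : gd (cmp (etaV (gr x) m) x) = gd x + join 0 m by rewrite cmp_d ?eVs // eVd addrC.
have [a [b [Hab E Ha Hb]]] := fact Hd.
have Eb : b = etaV (gs x) m by apply: etaV_u => //; rewrite -(cmp_s Hab) E cmp_s ?eVs.
by exists a; rewrite /Sq -Eb E.
Qed.
Lemma Sq_inj m x x' y : Sq m x y -> Sq m x' y -> x = x'.
Proof.
case=> H E [H' E'].
have Ee : etaV (gs x) m = etaV (gs x') m.
  by apply: (etaR_u (eVd' x m) (esym H) (eVd' x' m) (esym H')).
have : cmp (etaV (gr x) m) x = cmp (etaV (gr x') m) x' by rewrite E E' Ee.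
by case/ufp; rewrite ?eVs ?eVd.
Qed.
Lemma Sq_surj m y : exists x, Sq m x y.
Proof.
have [Hd Hr] := etaRV_spec m (gd_s y).
set th := etaRV (gs y) m in Hd Hr *.
have Hyt : gs y = gr th by [].
have Hd' : gd (cmp y th) = join 0 m + gd y by rewrite cmp_d // Hd addrC.
have [a [x [Hax E Ha Hx]]] := fact Hd'.
have Ea : a = etaV (gr x) m by apply: etaV_u.
have Et : th = etaV (gs x) m.
  by apply: etaV_u => //; rewrite -(cmp_s Hyt) -E cmp_s.
by exists x; split; rewrite -Et // -Ea.
Qed.
Lemma Sq0 x : Sq 0 x x.
Proof. by rewrite /Sq !etaV0 ?gd_r ?gd_s // grs cmp1l cmp1r. Qed.

Lemma SqD m n x y z : Sq n x y -> Sq m y z -> Sq (m + n) x z.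
Proof.
move=> S1 S2; have Hry := Sq_r S1; case: S1 => Hy E1; case: S2 => Hz E2.
rewrite /Sq !etaVD ?gd_r ?gd_s // -Hry -Hy.
have e1 : gs (etaV (gr y) m) = gr y by rewrite etaV_s ?gd_r.
have e2 : gs (etaV (gs y) m) = gs y by rewrite etaV_s ?gd_s.
have e3 : gs (etaV (gr x) n) = gr x by rewrite etaV_s ?gd_r.
have e4 : gs (etaV (gs x) n) = gs x by rewrite etaV_s ?gd_s.
split; first by rewrite cmp_r ?e2.
rewrite -cmpA ?e1 ?e3 // E1 cmpA ?e1 // E2 -cmpA ?e2 //.
Qed.

Lemma Sq_vert m (v : M) : gd v = 0 -> Sq m v (gr (etaV v m)).
Proof.
move=> Hv; have [Hr Hs] := deg0 Hv.
rewrite /Sq Hr Hs gsr; split => //.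
by rewrite cmp1l -{2}(etaV_s m Hv) cmp1r.
Qed.
Lemma Sq_rr m x y : Sq m x y -> Sq m (gr x) (gr y).
Proof. by move=> S; rewrite (Sq_r S); apply: Sq_vert; apply: gd_r. Qed.
Lemma Sq_ss m x y : Sq m x y -> Sq m (gs x) (gs y).
Proof. by case=> H _; rewrite H; apply: Sq_vert; apply: gd_s. Qed.

Lemma Sq_comp m (mu nu mu' nu' : M) : gs mu = gr nu -> Sq m mu mu' -> Sq m nu nu' ->
  gs mu' = gr nu' /\ Sq m (cmp mu nu) (cmp mu' nu').
Proof.
move=> Hmn S1 S2; have Hr2 := Sq_r S2; case: S1 => H1 E1; case: S2 => H2 E2.
have Hc : gs mu' = gr nu' by rewrite H1 Hr2 Hmn.
split => //.
have e1 : gs (etaV (gr mu) m) = gr mu by rewrite etaV_s ?gd_r.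
have e2 : gs (etaV (gs mu) m) = gs mu by rewrite etaV_s ?gd_s.
have e3 : gs (etaV (gs nu) m) = gs nu by rewrite etaV_s ?gd_s.
split; first by rewrite !cmp_s.
rewrite cmp_r // cmp_s // cmpA ?e1 // E1 -cmpA ?e2 // Hmn E2 cmpA ?e3 //.
Qed.

Lemma Sq_comp_inv m (mu nu mu' nu' : M) : gs mu' = gr nu' -> Sq m mu mu' -> Sq m nu nu' ->
  gs mu = gr nu.
Proof.
move=> Hc S1 S2; have Hr2 := Sq_r S2; case: S1 => H1 _.
by apply: (@etaV_rinj _ _ m); rewrite ?gd_s ?gd_r // -H1 -Hr2.
Qed.

Local Notation SG := (subgraph Xi).
Local Notation S := (gMor SG).

Lemma vgr (x : S) : val (@gr _ SG x) = gr (val x).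
Proof. by rewrite /= val_insubd gd_r degl0 eqxx. Qed.
Lemma vgs (x : S) : val (@gs _ SG x) = gs (val x).
Proof. by rewrite /= val_insubd gd_s degl0 eqxx. Qed.
Lemma vgd (x : S) : gd (val x) = join (@gd _ SG x) 0.
Proof. by move: (eqP (valP x)) => /= H; rewrite -{1}(joinK (gd (val x))) H. Qed.

Definition mkS (y : M) (H : degl (gd y) == 0) : S := exist _ y H.

Definition A (m : NN l) (x : S) : S := epsilon (inhabits x) (fun y : S => Sq m (val x) (val y)).
Definition B (m : NN l) (y : S) : S := epsilon (inhabits y) (fun x : S => Sq m (val x) (val y)).

Lemma A_spec m x : Sq m (val x) (val (A m x)).
Proof.
have [y Sy] := Sq_ex m (val x).
have Hy : degl (gd y) == 0 by rewrite (Sq_d Sy) (valP x).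
rewrite /A; apply: (epsilon_spec (inhabits x) (fun y : S => Sq m (val x) (val y))).
by exists (mkS Hy).
Qed.
Lemma B_spec m y : Sq m (val (B m y)) (val y).
Proof.
have [x Sx] := Sq_surj m (val y).
have Hx : degl (gd x) == 0 by rewrite -(Sq_d Sx) (valP y).
rewrite /B; apply: (epsilon_spec (inhabits y) (fun x : S => Sq m (val x) (val y))).
by exists (mkS Hx).
Qed.
Lemma A_val m x w : Sq m (val x) w -> val (A m x) = w.
Proof. by move=> S1; apply: Sq_fun (A_spec m x) S1. Qed.
Lemma B_val m y w : Sq m w (val y) -> val (B m y) = w.
Proof. by move=> S1; apply: Sq_inj (B_spec m y) S1. Qed.

Lemma AB m y : A m (B m y) = y.
Proof. by apply: val_inj; apply: A_val; apply: B_spec. Qed.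
Lemma BA m x : B m (A m x) = x.
Proof. by apply: val_inj; apply: B_val; apply: A_spec. Qed.
Lemma A0 x : A 0 x = x.
Proof. by apply: val_inj; apply: A_val; apply: Sq0. Qed.
Lemma B0 x : B 0 x = x.
Proof. by rewrite -{2}(AB 0 x) A0. Qed.
Lemma AD m n x : A (m + n) x = A m (A n x).
Proof. by apply: val_inj; apply: A_val; apply: SqD (A_spec _ _) (A_spec _ _). Qed.
Lemma A_inj m : injective (A m).
Proof. by move=> x y E; rewrite -(BA m x) E BA. Qed.
Lemma BD m n x : B (m + n) x = B m (B n x).
Proof. by apply: (@A_inj (m + n)); rewrite AB addrC AD !AB. Qed.
Lemma BA_comm n p x : B n (A p x) = A p (B n x).
Proof. by apply: (@A_inj n); rewrite AB -AD addrC AD AB. Qed.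

Lemma A_key p n p' n' x : p + n' = p' + n -> A p (B n x) = A p' (B n' x).
Proof.
move=> E; apply: (@A_inj n').
by rewrite -AD addrC E AD AB -{1}(AB n' x) -!AD addrC.
Qed.

Definition alpha (a : ZZ l) (x : S) : S := A (posz a) (B (negz a) x).

Lemma alpha0 x : alpha 0 x = x.
Proof.
rewrite /alpha.
have -> : posz (0 : ZZ l) = 0 by apply/ffunP=> i; rewrite !ffunE.
have -> : negz (0 : ZZ l) = 0 by apply/ffunP=> i; rewrite !ffunE.
by rewrite A0 B0.
Qed.
Lemma alphaD a b x : alpha (a + b) x = alpha a (alpha b x).
Proof.
rewrite /alpha BA_comm -AD -BD; apply: A_key; apply: posnegC.
by rewrite !toZD -!posnegE opprD addrACA -!posnegE.
Qed.
Lemma alpha_toZ m x : alpha (toZ m) x = A m x.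
Proof. by rewrite /alpha posz_toZ negz_toZ B0. Qed.
Lemma alpha_NtoZ m x : alpha (- toZ m) x = B m x.
Proof. by rewrite /alpha posz_NtoZ negz_NtoZ A0. Qed.

Lemma A_iso m : graph_iso (A m).
Proof.
split.
- by exists (B m) => x; rewrite ?AB ?BA.
- split.
  + move=> x; apply: val_inj; rewrite vgr; apply: A_val; rewrite vgr.
    exact: Sq_rr (A_spec m x).
  + move=> x; apply: val_inj; rewrite vgs; apply: A_val; rewrite vgs.
    exact: Sq_ss (A_spec m x).
  + move=> mu nu lam /= H; have Hc := comp_src H.
    have [Hc' S'] := Sq_comp Hc (A_spec m mu) (A_spec m nu).
    rewrite (cmpE H) in S'; rewrite (A_val S'); exact: cmpP.
- by move=> x /=; rewrite (Sq_d (A_spec m x)).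
Qed.

Lemma B_iso m : graph_iso (B m).
Proof.
split.
- by exists (A m) => x; rewrite ?AB ?BA.
- split.
  + move=> x; apply: val_inj; rewrite vgr; apply: B_val; rewrite vgr.
    exact: Sq_rr (B_spec m x).
  + move=> x; apply: val_inj; rewrite vgs; apply: B_val; rewrite vgs.
    exact: Sq_ss (B_spec m x).
  + move=> mu nu lam /= H; have Hc := comp_src H.
    have Hc0 := Sq_comp_inv Hc (B_spec m mu) (B_spec m nu).
    have [_ S'] := Sq_comp Hc0 (B_spec m mu) (B_spec m nu).
    rewrite (cmpE H) in S'; rewrite (B_val S'); exact: cmpP.
- by move=> x /=; rewrite -(Sq_d (B_spec m x)).
Qed.

Lemma iso_comp D (G : gdata D) (f g : gMor G -> gMor G) :
  graph_iso f -> graph_iso g -> graph_iso (f \o g).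
Proof.
case=> bf [f1 f2 f3] f4 [bg [g1 g2 g3] g4]; split.
- exact: bij_comp.
- split => [x|x|mu nu lam H] /=; first by rewrite g1 f1.
  + by rewrite g2 f2.
  + by apply: f3; apply: g3.
- by move=> x /=; rewrite f4 g4.
Qed.

Lemma alpha_action : is_action alpha.
Proof.
split; [exact: alpha0 | exact: alphaD |] => a.
exact: (iso_comp (A_iso _) (B_iso _)).
Qed.

Lemma alpha_P2 (xi : S) (m : NN l) : exists eta zeta : M,
  [/\ gd eta = join 0 m, gs eta = gr (val xi), gcomp eta (val xi) zeta &
      seg0 zeta (join (@gd _ SG xi) 0) (val (alpha (toZ m) xi))].
Proof.
rewrite alpha_toZ.
exists (etaV (gr (val xi)) m), (cmp (etaV (gr (val xi)) m) (val xi)).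
split; rewrite ?eVd ?eVs //; first by apply: cmpP; rewrite eVs.
split; first by rewrite (Sq_d (A_spec m xi)) vgd.
exists (etaV (gs (val xi)) m); case: (A_spec m xi) => H E; rewrite E; exact: cmpP.
Qed.

Lemma beta_uniq (beta : ZZ l -> S -> S) : is_action beta ->
  (forall (xi : S) (m : NN l), exists eta zeta : M,
  [/\ gd eta = join 0 m, gs eta = gr (val xi), gcomp eta (val xi) zeta &
      seg0 zeta (join (@gd _ SG xi) 0) (val (beta (toZ m) xi))]) ->
  forall a xi, beta a xi = alpha a xi.
Proof.
case=> b0 bD _ HP.
have H1 : forall m xi, beta (toZ m) xi = A m xi.
  move=> m xi; have [eta [zeta [Hd Hs Hc [Hsd [lam' Hl]]]]] := HP xi m.
  set y := val (beta (toZ m) xi) in Hsd Hl *.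
  have Ee : eta = etaV (gr (val xi)) m by apply: etaV_u.
  have Hyd : gd y = gd (val xi) by rewrite Hsd vgd.
  have Hyl := comp_src Hl.
  have Ez := cmpE Hc; have Ez' := cmpE Hl.
  have Hld : gd lam' = join 0 m.
    apply: (@addNI _ (gd y)); rewrite -cmp_d // Ez' -Ez cmp_d ?Ee ?eVs //.
    by rewrite eVd Hyd addrC.
  have El : lam' = etaV (gs (val xi)) m.
    by apply: etaV_u => //; rewrite -(cmp_s Hyl) Ez' -Ez cmp_s // Ee eVs.
  apply: val_inj; symmetry; apply: A_val; split; first by rewrite -El.
  by rewrite -Ee -El Ez Ez'.
have H2 : forall m xi, beta (- toZ m) xi = B m xi.
  move=> m xi; apply: (@A_inj m); rewrite AB -H1 -bD addrN; exact: b0.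
move=> a xi; rewrite {1}(posnegE a) bD H1 H2; by [].
Qed.

Lemma gr_in (x : M) : degl (gd (gr x)) == 0.
Proof. by rewrite gd_r degl0. Qed.

Definition F0P (x : M) (y : S) :=
  [/\ gd (val y) = join (degk (gd x)) 0, gs (val y) = gr (etaV (gs x) (degl (gd x))) &
      cmp (val y) (etaV (gs x) (degl (gd x))) = x].
Definition F0 (x : M) : S := epsilon (inhabits (mkS (gr_in x))) (F0P x).

Lemma F0_spec x : F0P x (F0 x).
Proof.
have Hd : gd x = join (degk (gd x)) 0 + join 0 (degl (gd x)) by rewrite -joinD addr0 add0r joinK.
have [a [b [Hab E Ha Hb]]] := fact Hd.
have Eb : b = etaV (gs x) (degl (gd x)) by apply: etaV_u => //; rewrite -E cmp_s.
have Hin : degl (gd a) == 0 by rewrite Ha deglJ.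
rewrite /F0; apply: (epsilon_spec (inhabits (mkS (gr_in x))) (F0P x)).
by exists (mkS Hin); split => //=; rewrite -Eb.
Qed.
Lemma F0_val x w : gd w = join (degk (gd x)) 0 -> gs w = gr (etaV (gs x) (degl (gd x))) ->
  cmp w (etaV (gs x) (degl (gd x))) = x -> val (F0 x) = w.
Proof.
move=> H1 H2 H3; case: (F0_spec x) => G1 G2 G3.
by case: (ufp G2 H2 (etrans G3 (esym H3))); rewrite ?G1 ?H1.
Qed.
Lemma F0_vert v : gd v = 0 -> val (F0 v) = v.
Proof.
move=> Hv; have [Hr Hs] := deg0 Hv.
apply: F0_val; rewrite Hv ?degk0 ?join00 // degl0 etaV0 ?Hs //.
by rewrite -{2}Hs cmp1r.
Qed.
Lemma F0_r x : gr (val (F0 x)) = gr x.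
Proof. by case: (F0_spec x) => _ H E; rewrite -{2}E cmp_r. Qed.

Definition Phi (x : M) : gMor (crossed alpha) := (F0 x, degl (gd x)).
Definition Psi (p : gMor (crossed alpha)) : M := cmp (val p.1) (etaRV (gs (val p.1)) p.2).

Lemma Psi_Phi x : Psi (Phi x) = x.
Proof.
rewrite /Psi /=; case: (F0_spec x) => H1 H2 H3.
have [Hd Hr] := etaRV_spec (degl (gd x)) (gd_s (val (F0 x))).
rewrite (@etaR_u _ _ (etaV (gs x) (degl (gd x))) _ Hd Hr) //.
by rewrite eVd'.
Qed.
Lemma Phi_Psi p : Phi (Psi p) = p.
Proof.
case: p => y m; rewrite /Phi /Psi /=.
have [Hd Hr] := etaRV_spec m (gd_s (val y)).
set th := etaRV (gs (val y)) m in Hd Hr *.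
have Hc : gs (val y) = gr th by [].
have Hcd : gd (cmp (val y) th) = join (@gd _ SG y) m by rewrite cmp_d // vgd Hd -joinD addr0 add0r.
have Et : th = etaV (gs (cmp (val y) th)) m by apply: etaV_u; rewrite ?cmp_s.
rewrite Hcd deglJ; congr pair; apply: val_inj; apply: F0_val; rewrite Hcd ?degkJ ?deglJ -?Et //.
exact: vgd.
Qed.

Lemma Phi_iso : graph_iso Phi.
Proof.
split.
- by exists Psi; [exact: Psi_Phi | exact: Phi_Psi].
- split.
  + move=> x; rewrite /Phi /= gd_r degl0; congr pair; apply: val_inj.
    by rewrite vgr F0_vert ?gd_r // F0_r.
  + move=> x; rewrite /Phi /= gd_s degl0 alpha_NtoZ; congr pair; apply: val_inj.
    rewrite F0_vert ?gd_s //; symmetry; apply: B_val; rewrite vgs.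
    case: (F0_spec x) => _ -> _; apply: Sq_vert; exact: gd_s.
  + move=> mu nu lam H; rewrite /Phi /=.
    have Hmn := comp_src H; have El := cmpE H; have Hd := comp_d H.
    set mm := degl (gd mu); set mn := degl (gd nu).
    split.
    * rewrite alpha_NtoZ; congr pair; apply: val_inj; apply: B_val.
      rewrite vgr vgs F0_r -Hmn; case: (F0_spec mu) => _ -> _.
      apply: Sq_vert; exact: gd_s.
    * rewrite alpha_toZ.
      case: (F0_spec mu) => Fm1 Fm2 Fm3; case: (F0_spec nu) => Fn1 Fn2 Fn3.
      set fm := val (F0 mu) in Fm1 Fm2 Fm3 *; set fn := val (F0 nu) in Fn1 Fn2 Fn3 *.
      have Sy := A_spec mm (F0 nu).
      set y := val (A mm (F0 nu)) in Sy *.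
      fold fn in Sy.
      set Em := etaV (gs mu) mm in Fm2 Fm3.
      set En := etaV (gs nu) mn in Fn2 Fn3.
      have grfn : gr fn = gs mu by rewrite /fn F0_r Hmn.
      have EEm : etaV (gr fn) mm = Em by rewrite grfn.
      have Hry := Sq_r Sy; rewrite EEm in Hry.
      case: Sy => Hsy Ey; rewrite EEm in Ey.
      set E' := etaV (gs fn) mm in Hsy Ey *.
      have sEm : gs Em = gs mu by rewrite /Em eVs'.
      have sEn : gs En = gs nu by rewrite /En eVs'.
      have sE' : gs E' = gs fn by rewrite /E' etaV_s ?gd_s.
      have c1 : gs fm = gr y by rewrite Fm2 Hry.
      have Hvl : val (F0 lam) = cmp fm y.
        apply: F0_val.
        - rewrite cmp_d // (Sq_d (A_spec mm (F0 nu))) Fm1 Fn1 -joinD addr0.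
          by rewrite Hd degkD.
        - rewrite cmp_s // Hsy Hd deglD -El cmp_s // etaVD ?gd_s // -/mm -/mn -/En -Fn2 -/E'.
          by rewrite cmp_r // sE' Fn2.
        - rewrite Hd deglD -El cmp_s // etaVD ?gd_s // -/mm -/mn -/En -Fn2 -/E'.
          rewrite -Fm3 -Fn3.
          have s1 : gs fn = gr En by [].
          have s2 : gs Em = gr (cmp fn En) by rewrite cmp_r // sEm grfn.
          have s3 : gs Em = gr fn by rewrite sEm grfn.
          have s4 : gs E' = gr En by rewrite sE'.
          have s5 : gs y = gr (cmp E' En) by rewrite cmp_r.
          rewrite -(cmpA Fm2 s2) (cmpA s3 s1) Ey -(cmpA Hsy s4) (cmpA c1 s5) //.
      by rewrite Hvl; apply: cmpP.
    * by rewrite Hd deglD.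
- by move=> x; rewrite /Phi /=; case: (F0_spec x) => -> _ _; rewrite degkJ joinK.
Qed.

End G.

Theorem proposition3p6 (k l : nat) (Xi : gdata (NN (k + l))) :
  is_kgraph Xi ->
  (forall v : gMor Xi, vertex 0 v -> forall j : 'I_l,
     (exists! lam : gMor Xi, gr lam = v /\ gd lam = join 0 (gen j)) /\
     (exists! lam : gMor Xi, gs lam = v /\ gd lam = join 0 (gen j))) ->
  (forall (v : gMor Xi) (m : NN l), vertex 0 v ->
     exists! eta : gMor Xi, gd eta = join 0 m /\ gs eta = v) /\
  exists alpha : ZZ l -> gMor (subgraph Xi) -> gMor (subgraph Xi),
    let P := fun beta : ZZ l -> gMor (subgraph Xi) -> gMor (subgraph Xi) =>
      is_action beta /\
      forall (xi : gMor (subgraph Xi)) (m : NN l),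
        exists eta zeta : gMor Xi,
          [/\ gd eta = join 0 m, gs eta = gr (val xi), gcomp eta (val xi) zeta &
              seg0 zeta (join (gd xi) 0) (val (beta (toZ m) xi))] in
    [/\ P alpha,
        (forall beta, P beta -> forall a xi, beta a xi = alpha a xi) &
        graph_isomorphic Xi (crossed alpha)].
Proof.
move=> HK HV; split.
  by move=> v m Hv; apply: (etaS_ex HK HV m Hv).
exists (@alpha k l Xi) => /=; split.
- split; [exact: alpha_action HK HV | exact: alpha_P2 HK HV].
- by move=> beta [Ha HP] a xi; apply: (beta_uniq HK HV Ha HP).
- by exists (@Phi k l Xi HK); apply: (Phi_iso HK HV).
Qed.
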